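(* Let $m,n\in\mathbb{N}$, $\varepsilon\in\mathbb{R}$, and let $\bar g=-4\,du\,dv+\bar\rho^2\mathring\gamma_{\mathbb{S}^{n-1}}-\tau^2\mathring\gamma_{\mathbb{S}^{m-1}}$ with $\bar\rho=r+2\varepsilon f$. Then, wherever the coordinates are defined and $\bar\rho\ne0$, \[ \bar\square\Big(\frac{f}{\bar\rho}\Big)=-\frac{(n-3)f}{\bar\rho^3}+\frac{(n+m-2)\,r}{2\bar\rho^2}. \]
   Context: On $\mathbb{R}^{m+n}$ with Cartesian coordinates $t\in\mathbb{R}^m$, $x\in\mathbb{R}^n$: $r=|x|$, $\tau=|t|$, $u=\frac12(\tau-r)$, $v=\frac12(\tau+r)$, $f=-uv=\frac14(|x|^2-|t|^2)$. On $\{\tau\ne0,r\ne0\}$ one uses coordinates $(u,v,\omega_x,\omega_t)$ with $\omega_x=x/|x|\in\mathbb{S}^{n-1}$, $\omega_t=t/|t|\in\mathbb{S}^{m-1}$; $\mathring\gamma_{\mathbb{S}^k}$ is the unit round metric. $\bar\square=\bar g^{\alpha\beta}\bar\nabla_{\alpha\beta}$ is the wave operator of $\bar g$. *)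

(* Defs.v *)
From Stdlib Require Import Reals.
From Coquelicot Require Import Coquelicot.
Open Scope R_scope.

(* Null coordinates: u = (tau - r)/2, v = (tau + r)/2, so
   tau = u + v, r = v - u, f = -u v. *)
Definition tau_uv (u v : R) : R := u + v.
Definition r_uv (u v : R) : R := v - u.
Definition f_uv (u v : R) : R := - (u * v).

Definition rhobar (eps : R) (u v : R) : R := r_uv u v + 2 * eps * f_uv u v.

(* Volume density of  gbar = -4 du dv + rho^2 g_{S^{n-1}} - tau^2 g_{S^{m-1}}
   in coordinates (u,v,omega_x,omega_t), up to the factor
   2 sqrt(det g_{S^{n-1}}) sqrt(det g_{S^{m-1}}) which does not depend on
   (u,v) and cancels in the wave operator. *)
Definition vol_density (m n : nat) (rho : R -> R -> R) (u v : R) : R :=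
  Rabs (rho u v) ^ (n - 1) * Rabs (tau_uv u v) ^ (m - 1).

(* Wave operator of gbar, box = |g|^{-1/2} d_a (|g|^{1/2} g^{ab} d_b .),
   applied to a function Phi of (u,v) only (angular derivatives vanish).
   The (u,v)-block of gbar is g_{uv} = g_{vu} = -2, so g^{uv} = g^{vu} = -1/2. *)
Definition wave_uv (m n : nat) (rho : R -> R -> R) (Phi : R -> R -> R)
    (u v : R) : R :=
  / vol_density m n rho u v *
  ( Derive (fun u' => vol_density m n rho u' v * (-1/2) *
                       Derive (fun v' => Phi u' v') v) u
  + Derive (fun v' => vol_density m n rho u v' * (-1/2) *
                       Derive (fun u' => Phi u' v') u) v ).

(* Main.v *)
Require Import Defs.
From Stdlib Require Import Reals Lra Lia.
From Coquelicot Require Import Coquelicot.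
Open Scope R_scope.

Definition Fv (eps u v : R) : R :=
  ((- u) * rhobar eps u v - f_uv u v * (1 - 2 * eps * u)) / rhobar eps u v ^ 2.
Definition Fu (eps u v : R) : R :=
  ((- v) * rhobar eps u v - f_uv u v * (-1 - 2 * eps * v)) / rhobar eps u v ^ 2.

Lemma Dv eps u v : rhobar eps u v <> 0 ->
  Derive (fun v' => f_uv u v' / rhobar eps u v') v = Fv eps u v.
Proof.
  intro H. apply is_derive_unique. unfold Fv, rhobar, r_uv, f_uv in *.
  auto_derive. - exact H. - field. exact H.
Qed.

Lemma Du eps u v : rhobar eps u v <> 0 ->
  Derive (fun u' => f_uv u' v / rhobar eps u' v) u = Fu eps u v.
Proof.
  intro H. apply is_derive_unique. unfold Fu, rhobar, r_uv, f_uv in *.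
  auto_derive. - exact H. - field. exact H.
Qed.

Lemma loc_pos (g : R -> R) x : continuity_pt g x -> 0 < g x ->
  locally x (fun y => 0 < g y).
Proof.
  intros Hc Hp.
  generalize (proj1 (continuity_pt_locally g x) Hc (mkposreal _ Hp)).
  apply filter_imp. intros y Hy. simpl in Hy.
    apply Rabs_def2 in Hy. lra.
Qed.

Lemma abs_s s x : (s = 1 \/ s = -1) -> 0 < s * x -> Rabs x = s * x.
Proof.
  intros [-> | ->] H.
  - rewrite Rabs_pos_eq; lra.
  - rewrite Rabs_left; lra.
Qed.

Lemma pp k x : x <> 0 -> INR k * x ^ Init.Nat.pred k = INR k * x ^ k / x.
Proof.
  intro H. destruct k as [|k].
  - simpl. field. exact H.
  - simpl. field. exact H.
Qed.

Theorem proposition3p4 (m n : nat) (eps u v : R) :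
  (1 <= m)%nat -> (1 <= n)%nat ->
  0 < tau_uv u v -> 0 < r_uv u v ->
  rhobar eps u v <> 0 ->
  wave_uv m n (rhobar eps) (fun u' v' => f_uv u' v' / rhobar eps u' v') u v
  = - (INR n - 3) * f_uv u v / rhobar eps u v ^ 3
    + (INR n + INR m - 2) * r_uv u v / (2 * rhobar eps u v ^ 2).
Proof.
  intros Hm Hn Ht Hr Hrho.
  destruct m as [|m']; [lia|]. destruct n as [|n']; [lia|].
  assert (Hs : exists s, (s = 1 \/ s = -1) /\ 0 < s * rhobar eps u v).
  { destruct (Rlt_or_le 0 (rhobar eps u v)).
    - exists 1. split; [left; reflexivity| lra].
    - exists (-1). split; [right; reflexivity| ]. destruct H; [lra|]. exfalso; auto. }
  destruct Hs as [s [Hs Hsr]].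
  unfold wave_uv.
  rewrite (Derive_ext_loc _ (fun u' => (s * rhobar eps u' v) ^ n' * tau_uv u' v ^ m'
                                        * (-1/2) * Fv eps u' v)).
  2:{ assert (L1 : locally u (fun y => 0 < s * rhobar eps y v)).
      { apply loc_pos; [|exact Hsr]. unfold rhobar, r_uv, f_uv. reg. }
      assert (L2 : locally u (fun y => 0 < tau_uv y v)).
      { apply loc_pos; [|exact Ht]. unfold tau_uv. reg. }
      generalize (filter_and _ _ L1 L2). apply filter_imp.
      intros y [H1 H2]. unfold vol_density.
      rewrite Dv by (intro E; rewrite E in H1; lra).
      replace (S n' - 1)%nat with n' by lia. replace (S m' - 1)%nat with m' by lia.
      rewrite (abs_s s _ Hs H1). rewrite (abs_s 1 _ (or_introl eq_refl)) by lra.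
      rewrite Rmult_1_l. reflexivity. }
  rewrite (Derive_ext_loc (fun v' => vol_density (S m') (S n') (rhobar eps) u v' * (-1/2) *
      Derive (fun u' => f_uv u' v' / rhobar eps u' v') u) (fun v' => (s * rhobar eps u v') ^ n' * tau_uv u v' ^ m'
                                        * (-1/2) * Fu eps u v')).
  2:{ assert (L1 : locally v (fun y => 0 < s * rhobar eps u y)).
      { apply loc_pos; [|exact Hsr]. unfold rhobar, r_uv, f_uv. reg. }
      assert (L2 : locally v (fun y => 0 < tau_uv u y)).
      { apply loc_pos; [|exact Ht]. unfold tau_uv. reg. }
      generalize (filter_and _ _ L1 L2). apply filter_imp.
      intros y [H1 H2]. unfold vol_density.
      rewrite Du by (intro E; rewrite E in H1; lra).
      replace (S n' - 1)%nat with n' by lia. replace (S m' - 1)%nat with m' by lia.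
      rewrite (abs_s s _ Hs H1). rewrite (abs_s 1 _ (or_introl eq_refl)) by lra.
      rewrite Rmult_1_l. reflexivity. }
  match goal with |- context [Derive ?G u] => erewrite (is_derive_unique G u) end; cycle 1.
  { unfold Fv, rhobar, r_uv, f_uv, tau_uv in *. auto_derive.
    - rewrite ?Rmult_1_r; apply Rmult_integral_contrapositive_currified; exact Hrho.
    - reflexivity. }
  match goal with |- context [Derive ?G v] => erewrite (is_derive_unique G v) end; cycle 1.
  { unfold Fu, rhobar, r_uv, f_uv, tau_uv in *. auto_derive.
    - rewrite ?Rmult_1_r; apply Rmult_integral_contrapositive_currified; exact Hrho.
    - reflexivity. }
  unfold vol_density.
  replace (S n' - 1)%nat with n' by lia. replace (S m' - 1)%nat with m' by lia.
  rewrite (abs_s s _ Hs Hsr). rewrite (abs_s 1 _ (or_introl eq_refl)) by lra.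
  rewrite Rmult_1_l.
  unfold rhobar, r_uv, f_uv, tau_uv in *.
  rewrite !S_INR.
  change (v + - u) with (v - u).
  set (rh := v - u + 2 * eps * - (u * v)) in *.
  assert (Hsn : s * rh <> 0) by lra.
  assert (Htn : u + v <> 0) by lra.
  rewrite (pp n' (s * rh) Hsn), (pp m' (u + v) Htn).
  assert (HP : (s * rh) ^ n' <> 0) by (apply pow_nonzero; exact Hsn).
  assert (HT : (u + v) ^ m' <> 0) by (apply pow_nonzero; exact Htn).
  set (P := (s * rh) ^ n') in *. set (T := (u + v) ^ m') in *.
  clearbody P T. unfold rh in *. destruct Hs as [Hs | Hs]; subst s; field; repeat split; assumption.
Qed.
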